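(* Let $n>1$ be an odd perfect square. Then $C_{S(n)^*}\le 9$.
   Context: For a natural number $n$, $\mathbb Z_n=\mathbb Z/n\mathbb Z$, $S(n)=\{x^2:x\in\mathbb Z_n\}$, $S(n)^*=S(n)\setminus\{0\}$. For $A\subseteq\mathbb Z_n$, a sequence $(y_1,\dots,y_t)$ ($t\ge1$) in $\mathbb Z_n$ is an $A$-weighted zero-sum sequence if there exist $a_1,\dots,a_t\in A$ with $\sum a_iy_i=0$. $C_A(n)$ is the least positive integer $t$ such that every sequence of length $t$ in $\mathbb Z_n$ has a nonempty subsequence of consecutive terms that is an $A$-weighted zero-sum sequence; $C_{S(n)^*}=C_{S(n)^*}(n)$. *)

(* Defs.v *)
From mathcomp Require Import all_boot all_order all_algebra.
Set Implicit Arguments. Unset Strict Implicit. Unset Printing Implicit Defensive.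
Import GRing.Theory.
Local Open Scope ring_scope.

(* S(n) = squares in Z_n ; S(n)^* = nonzero squares.  Used with 1 < n so 'Z_n is Z/nZ. *)
Definition sq_set (n : nat) : {set 'Z_n} := [set x * x | x : 'Z_n].
Definition sq_star (n : nat) : {set 'Z_n} := sq_set n :\ 0.

Definition weighted_zero_sum (n : nat) (A : {set 'Z_n}) (y : seq 'Z_n) : Prop :=
  exists a : seq 'Z_n, size a = size y /\ all (fun x => x \in A) a /\
    \sum_(i < size y) a`_i * y`_i = 0.

Definition C_property (n : nat) (A : {set 'Z_n}) (t : nat) : Prop :=
  forall y : seq 'Z_n, size y = t ->
    exists i j : nat, (i < j <= t)%N /\ weighted_zero_sum A (drop i (take j y)).

(* C_A(n) <= k : the least positive t with C_property is at most k *)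
Definition C_le (n : nat) (A : {set 'Z_n}) (k : nat) : Prop :=
  exists t : nat, (1 <= t <= k)%N /\ C_property A t.

(* Main.v *)
Require Import Defs.
From mathcomp Require Import all_boot all_order all_algebra.
From mathcomp Require Import zify ring.
Set Implicit Arguments. Unset Strict Implicit. Unset Printing Implicit Defensive.
Import GRing.Theory.
Lemma Fp_dvd (p n : nat) : prime p -> (p %| n) = ((n%:R : 'F_p) == 0)%R.
Proof. by move=> pp; apply: dvdn_pcharf; apply: pchar_Fp. Qed.

Lemma Fp_sq_inj (p k l : nat) : prime p -> (k + l < p)%N ->
  ((k%:R : 'F_p) ^+ 2 = (l%:R) ^+ 2)%R -> k = l.
Proof.
move=> pp hkl /eqP; rewrite -subr_eq0 subr_sqr mulf_eq0 => /orP [].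
  rewrite subr_eq0 => /eqP /(congr1 (@nat_of_ord _)).
  by rewrite !val_Fp_nat // !modn_small //; lia.
rewrite -natrD -(Fp_dvd _ pp) => /dvdn_leq; lia.
Qed.

Lemma ZS3 (p x1 x2 x3 : nat) : prime p -> (2 < p)%N ->
  ~~ (p %| x1) -> ~~ (p %| x2) -> ~~ (p %| x3) ->
  exists c1 c2 c3, [/\ ~~ (p %| c1), ~~ (p %| c2), ~~ (p %| c3) &
   [\/ p %| c1^2 * x1 + c2^2 * x2, p %| c2^2 * x2 + c3^2 * x3
     | p %| c1^2 * x1 + c2^2 * x2 + c3^2 * x3]].
Proof.
move=> pp p2 h1 h2 h3.
have oddp : odd p by case: (even_prime pp) => [e|//]; rewrite e in p2.
set h := p.+1./2.
have hh : h.*2 = p.+1 by rewrite /h even_halfK //= negbK.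
have hp : (h <= p)%N by lia.
pose X1 : 'F_p := (x1%:R)%R; pose X2 : 'F_p := (x2%:R)%R; pose X3 : 'F_p := (x3%:R)%R.
have nX1 : X1 != 0%R by rewrite /X1 -Fp_dvd.
have nX2 : X2 != 0%R by rewrite /X2 -Fp_dvd.
have nX3 : X3 != 0%R by rewrite /X3 -Fp_dvd.
pose gA := fun k : 'I_h => (X1 * (k%:R) ^+ 2)%R.
pose gB := fun k : 'I_h => (- X2 - X3 * (k%:R) ^+ 2)%R.
have sqi : forall k l : 'I_h, ((k%:R : 'F_p) ^+ 2 = (l%:R) ^+ 2)%R -> k = l.
  move=> k l /(Fp_sq_inj pp) e; apply: val_inj; apply: e.
  have := ltn_ord k; have := ltn_ord l; lia.
have iA : injective gA by move=> k l /(mulfI nX1) /sqi.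
have iB : injective gB.
  by move=> k l; rewrite /gB => /addrI /oppr_inj /(mulfI nX3) /sqi.
have cA : #|[set gA k | k in 'I_h]| = h by rewrite card_imset // card_ord.
have cB : #|[set gB k | k in 'I_h]| = h by rewrite card_imset // card_ord.
have cU := cardsUI [set gA k | k in 'I_h] [set gB k | k in 'I_h].
have mU : (#|[set gA k | k in 'I_h] :|: [set gB k | k in 'I_h]| <= p)%N.
  by apply: (leq_trans (max_card _)); rewrite (card_Fp pp).
rewrite cA cB in cU. have : (0 < #|[set gA k | k in 'I_h] :&: [set gB k | k in 'I_h]|)%N. lia.
case/card_gt0P => z /setIP [/imsetP [k1 _ ->] /imsetP [k2 _]].
rewrite /gA /gB => E0.
have E : (X1 * (k1%:R) ^+ 2 + X2 + X3 * (k2%:R) ^+ 2 = 0)%R by rewrite E0; ring.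
have k1p : (k1 < p)%N by have := ltn_ord k1; lia.
have k2p : (k2 < p)%N by have := ltn_ord k2; lia.
have ndk : forall k, (0 < k < p)%N -> ~~ (p %| k).
  by move=> k hk; apply/negP => /dvdn_leq; lia.
have nd1 : ~~ (p %| 1) by rewrite dvdn1; apply/eqP; lia.
have z0 : (((0%:R)%R : 'F_p) ^+ 2 = 0)%R by rewrite mulr0n expr2 mulr0.
case: (posnP k1) => [k10 | k1pos].
  rewrite k10 z0 mulr0 add0r in E.
  case: (posnP k2) => [k20 | k2pos].
    by rewrite k20 z0 mulr0 addr0 in E; rewrite E eqxx in nX2.
  exists 1, 1, k2; split => //; first by apply: ndk; apply/andP.
  apply: Or32; rewrite Fp_dvd // natrD !natrM -/X2 -/X3.
  by apply/eqP; rewrite -E; ring.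
case: (posnP k2) => [k20 | k2pos].
  rewrite k20 z0 mulr0 addr0 in E.
  exists k1, 1, 1; split => //; first by apply: ndk; apply/andP.
  apply: Or31; rewrite Fp_dvd // natrD !natrM -/X2 -/X1.
  by apply/eqP; rewrite -E; ring.
exists k1, 1, k2; split => //; try by apply: ndk; apply/andP.
apply: Or33; rewrite Fp_dvd // !natrD !natrM -/X2 -/X1 -/X3.
by apply/eqP; rewrite -E; ring.
Qed.
Definition good (p : nat) (f : nat -> nat) (i j : nat) : Prop :=
  exists s : nat -> nat, (forall k, (i <= k < j)%N -> ~~ (p %| s k)) /\
    p ^ 2 %| \sum_(i <= k < j) s k ^ 2 * f k.

Lemma dvd_sum_range (p a b : nat) (F : nat -> nat) :
  (forall k, (a <= k < b)%N -> p %| F k) -> p %| \sum_(a <= k < b) F k.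
Proof.
move=> H; rewrite big_nat_cond; apply: (big_ind (fun x => p %| x)) => //.
  by move=> x y; apply: dvdn_add.
by move=> k /andP [hk _]; apply: H.
Qed.

Lemma sum_split (a b : nat) (F : nat -> nat) : (a < b)%N ->
  \sum_(a <= k < b.+1) F k = F a + \sum_(a.+1 <= k < b) F k + F b.
Proof.
move=> ab; rewrite big_ltn; last by lia.
by rewrite big_nat_recr //= addnA.
Qed.

Lemma good_zero p f k : (1 < p)%N -> p ^ 2 %| f k -> good p f k k.+1.
Proof.
move=> p1 h; exists (fun _ => 1); split.
  by move=> _ _; rewrite dvdn1; apply/eqP; lia.
by rewrite big_nat1 exp1n mul1n.
Qed.

Lemma next_unit (P : nat -> bool) (k b : nat) :
  (exists u, (k < u < b)%N /\ P u) ->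
  exists u, [/\ (k < u < b)%N, P u & forall v, (k < v < u)%N -> ~~ P v].
Proof.
elim: b => [[u]|b IH [u [hu Pu]]]; first lia.
case: (boolP [exists v : 'I_b, (k < v)%N && P v]).
  case/existsP => v /andP [kv Pv].
  have [w [hw Pw Hw]] : exists u, [/\ (k < u < b)%N, P u & forall v, (k < v < u)%N -> ~~ P v].
    by apply: IH; exists v; split => //; rewrite kv ltn_ord.
  by exists w; split => //; lia.
move/existsPn => H.
have ub : u = b.
  apply/eqP; rewrite eqn_leq; apply/andP; split; first lia.
  rewrite leqNgt; apply/negP => ub.
  by have := H (Ordinal ub); rewrite /= Pu andbT; case: (k < u)%N hu => //=; lia.
subst u; exists b; split => // v hv.
have vb : (v < b)%N by lia.
by have := H (Ordinal vb); rewrite /=; case: (k < v)%N hv => //=; lia.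
Qed.

Lemma lift p f i j u (s : nat -> nat) : prime p -> (2 < p)%N ->
  (i <= u < j)%N -> ~~ (p %| f u) ->
  (forall k, (i <= k < j)%N -> ~~ (p %| s k)) ->
  p %| \sum_(i <= k < j) s k ^ 2 * f k -> good p f i j.
Proof.
move=> pp p2 hu fu hs /dvdnP [T' hT].
set c := 2 * s u * f u.
have cop : coprime p c.
  rewrite prime_coprime // /c !Euclid_dvdM // negb_or fu andbT negb_or hs // andbT.
  apply/negP => /dvdn_leq; lia.
have [a _ ha] := Bezoutl c (prime_gt0 pp).
rewrite (eqP cop) in ha.
case/dvdnP: ha => r hr.
set t := a * T'.
pose s' k := if k == u then s u + p * t else s k.
exists s'; split.
  move=> k hk; rewrite /s'; case: eqP => [_|_]; last exact: hs.
  rewrite dvdn_addl; first exact: hs.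
  exact: dvdn_mulr.
set D := (2 * s u * p * t + p ^ 2 * t ^ 2) * f u.
have E : \sum_(i <= k < j) s' k ^ 2 * f k =
         \sum_(i <= k < j) s k ^ 2 * f k + \sum_(i <= k < j) (k == u) * D.
  rewrite -big_split /=; apply: eq_bigr => k _; rewrite /s'.
  case: eqP => [->|_]; last by rewrite mul0n addn0.
  rewrite mul1n /D; nia.
have E2 : \sum_(i <= k < j) (k == u) * D = D.
  rewrite (bigD1_seq u) /= ?mem_index_iota ?iota_uniq // eqxx mul1n big1 ?addn0 //.
  by move=> k /negbTE ->.
rewrite E E2 hT /D.
apply/dvdnP; exists (T' * r + t ^ 2 * f u).
have : T' * p * (gcdn p c + a * c) = T' * p * (r * p) by rewrite (eqP cop) hr.
rewrite (eqP cop) /c /t; nia.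
Qed.

Lemma sum2 (a : nat) (F : nat -> nat) :
  \sum_(a <= k < a.+2) F k = F a + F a.+1.
Proof. by rewrite big_ltn // big_ltn // big_geq // addn0. Qed.

Lemma sum3 (a : nat) (F : nat -> nat) :
  \sum_(a <= k < a.+3) F k = F a + F a.+1 + F a.+2.
Proof. by rewrite big_ltn ?(sum2 a.+1) ?addnA //; lia. Qed.

Lemma caseB p f w : prime p -> (2 < p)%N ->
  p %| f w -> p %| f w.+1 -> p %| f w.+2 ->
  ~~ (p ^ 2 %| f w) -> ~~ (p ^ 2 %| f w.+1) -> ~~ (p ^ 2 %| f w.+2) ->
  exists i j, (w <= i < j)%N /\ (j <= w.+3)%N /\ good p f i j.
Proof.
move=> pp p2 d0 d1 d2 n0 n1 n2.
have key : forall y, p %| y -> ~~ (p ^ 2 %| y) -> ~~ (p %| y %/ p).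
  move=> y dy ny; apply/negP => /dvdnP [z hz]; move: ny; rewrite -(divnK dy) hz.
  have -> : z * p * p = z * p ^ 2 by rewrite -mulnA expnS expn1.
  by rewrite dvdn_mull.
have [c1 [c2 [c3 [h1 h2 h3 H]]]] :=
  ZS3 pp p2 (key _ d0 n0) (key _ d1 n1) (key _ d2 n2).
have p0 : (0 < p)%N by apply: prime_gt0.
pose s k := if k == w then c1 else if k == w.+1 then c2 else c3.
have sw : s w = c1 by rewrite /s eqxx.
have sw1 : s w.+1 = c2 by rewrite /s eqxx; case: eqP => //; lia.
have sw2 : s w.+2 = c3 by rewrite /s; do 2 (case: eqP; first lia).
have hs : forall k, ~~ (p %| s k).
  by move=> k; rewrite /s; do 2 case: eqP => _ //.
case: H => H.
- exists w, w.+2; do 2 (split; first lia); exists s; split => [k _|]; first exact: hs.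
  rewrite sum2 sw sw1 -(divnK d0) -(divnK d1) !mulnA -mulnDl expnS expn1.
  by rewrite dvdn_pmul2r.
- exists w.+1, w.+3; do 2 (split; first lia); exists s; split => [k _|]; first exact: hs.
  rewrite sum2 sw1 sw2 -(divnK d1) -(divnK d2) !mulnA -mulnDl expnS expn1.
  by rewrite dvdn_pmul2r.
- exists w, w.+3; do 2 (split; first lia); exists s; split => [k _|]; first exact: hs.
  rewrite sum3 sw sw1 sw2 -(divnK d0) -(divnK d1) -(divnK d2) !mulnA -!mulnDl expnS expn1.
  by rewrite dvdn_pmul2r.
Qed.

Lemma dvd4 p a b c x y : p %| a + b + c -> p %| x -> p %| y ->
  p %| a + (x + (b + y)) + c.
Proof.
move=> h hx hy; have -> : a + (x + (b + y)) + c = (a + b + c) + (x + y) by lia.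
by rewrite dvdn_add // dvdn_add.
Qed.

Lemma caseA p f k1 k2 k3 : prime p -> (2 < p)%N -> (k1 < k2 < k3)%N ->
  ~~ (p %| f k1) -> ~~ (p %| f k2) -> ~~ (p %| f k3) ->
  (forall v, (k1 < v < k2)%N -> p %| f v) ->
  (forall v, (k2 < v < k3)%N -> p %| f v) ->
  exists i j, (k1 <= i < j)%N /\ (j <= k3.+1)%N /\ good p f i j.
Proof.
move=> pp p2 hk u1 u2 u3 m12 m23.
have [c1 [c2 [c3 [h1 h2 h3 H]]]] := ZS3 pp p2 u1 u2 u3.
pose s k := if k == k1 then c1 else if k == k2 then c2 else if k == k3 then c3 else 1.
have s1 : s k1 = c1 by rewrite /s eqxx.
have s2 : s k2 = c2 by rewrite /s eqxx; case: eqP => //; lia.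
have s3 : s k3 = c3 by rewrite /s eqxx; do 2 (case: eqP; first lia).
have nd1 : ~~ (p %| 1) by rewrite dvdn1; apply/eqP; have := prime_gt1 pp; lia.
have hs : forall k, ~~ (p %| s k).
  by move=> k; rewrite /s; do 3 case: eqP => _ //.
have mid12 : p %| \sum_(k1.+1 <= k < k2) s k ^ 2 * f k.
  by apply: dvd_sum_range => k hk'; apply: dvdn_mull; apply: m12; lia.
have mid23 : p %| \sum_(k2.+1 <= k < k3) s k ^ 2 * f k.
  by apply: dvd_sum_range => k hk'; apply: dvdn_mull; apply: m23; lia.
case: H => H.
- exists k1, k2.+1; do 2 (split; first lia).
  apply: (lift (u := k1) (s := s)) => //; first lia.
  rewrite sum_split; last lia.
  by rewrite s1 s2 addnAC dvdn_add.
- exists k2, k3.+1; do 2 (split; first lia).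
  apply: (lift (u := k2) (s := s)) => //; first lia.
  rewrite sum_split; last lia.
  by rewrite s2 s3 addnAC dvdn_add.
- exists k1, k3.+1; split; first by clear -hk; lia.
  split; first by clear -hk; lia.
  apply: (lift (u := k1) (s := s)) => //; first by clear -hk; lia.
  rewrite sum_split; last by clear -hk; lia.
  rewrite (@big_cat_nat _ _ _ k2); [|clear -hk; lia|clear -hk; lia].
  rewrite (@big_ltn _ _ _ k2 k3); last by clear -hk; lia.
  rewrite s1 s2 s3; exact: dvd4 H mid12 mid23.
Qed.

Lemma core9 p f : prime p -> (2 < p)%N ->
  exists i j, (i < j <= 9)%N /\ good p f i j.
Proof.
move=> pp p2.
case: (boolP [exists k : 'I_9, p ^ 2 %| f k]) => [/existsP [k hk] | /existsPn H0].
  exists k, k.+1; split; first by rewrite ltnSn /=; exact: ltn_ord k.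
  by apply: good_zero => //; apply: prime_gt1.
have N0 : forall k, (k < 9)%N -> ~~ (p ^ 2 %| f k).
  by move=> k hk; exact: (H0 (Ordinal hk)).
have win : forall w, (w + 3 <= 9)%N ->
   (exists i j, (i < j <= 9)%N /\ good p f i j) \/
   (exists u, (w <= u < w + 3)%N /\ ~~ (p %| f u)).
  move=> w hw.
  case: (boolP [&& p %| f w, p %| f w.+1 & p %| f w.+2]) => [/and3P [a b c]|].
    left; have [i [j [h1 [h2 g]]]] :=
      caseB pp p2 a b c (N0 w ltac:(lia)) (N0 w.+1 ltac:(lia)) (N0 w.+2 ltac:(lia)).
    by exists i, j; split => //; lia.
  rewrite !negb_and => /or3P [] h; right.
  - by exists w; split => //; lia.
  - by exists w.+1; split => //; lia.
  - by exists w.+2; split => //; lia.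
case: (win 0 isT) => [//|[u1 [hu1 pu1]]].
case: (win 3 isT) => [//|[u2 [hu2 pu2]]].
case: (win 6 isT) => [//|[u3 [hu3 pu3]]].
have e2 : exists u, (u1 < u < 6)%N /\ ~~ (p %| f u) by exists u2; split => //; lia.
have [k2 [hk2 pk2 m12]] := @next_unit (fun v => ~~ (p %| f v)) u1 6 e2.
have e3 : exists u, (k2 < u < 9)%N /\ ~~ (p %| f u) by exists u3; split => //; lia.
have [k3 [hk3 pk3 m23]] := @next_unit (fun v => ~~ (p %| f v)) k2 9 e3.
have hk : (u1 < k2 < k3)%N by lia.
have [i [j [h1 [h2 g]]]] := caseA pp p2 hk pu1 pk2 pk3
  (fun v hv => negbNE (m12 v hv)) (fun v hv => negbNE (m23 v hv)).
by exists i, j; split => //; lia.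
Qed.

Lemma Zn_val (n : nat) (x : 'Z_n) : x = ((nat_of_ord x)%:R)%R.
Proof. by rewrite natr_Zp. Qed.

Theorem mainTheorem17 (n : nat) :
  (1 < n)%N -> odd n -> (exists m : nat, n = (m * m)%N) ->
  C_le (sq_star n) 9.
Proof.
move=> n1 on [m nm].
have m1 : (1 < m)%N by subst n; nia.
set p := pdiv m.
have pp : prime p := pdiv_prime m1.
have pm : p %| m := pdiv_dvd m.
have p2 : (2 < p)%N.
  apply: (odd_prime_gt2 _ pp); case: (even_prime pp) => // e.
  have : 2 %| n by rewrite nm dvdn_mulr // -e.
  by rewrite dvdn2 on.
set q := m %/ p.
have mq : m = q * p by rewrite divnK.
exists 9; split => //.
move=> y sy.
pose f k := nat_of_ord (nth 0%R y k).
have [i [j [hij [s [hs hd]]]]] := core9 f pp p2.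
exists i, j; split; first exact: hij.
have sz : size (drop i (take j y)) = j - i.
  by rewrite size_drop size_takel // sy; lia.
exists [seq ((((q * s (i + k)) ^ 2)%N%:R)%R : 'Z_n) | k <- iota 0 (j - i)].
split; first by rewrite size_map size_iota sz.
split.
  apply/allP => a /mapP [k hk ->].
  rewrite mem_iota in hk.
  rewrite /sq_star in_setD1; apply/andP; split.
    apply/negP => /eqP /(congr1 (@nat_of_ord _)); rewrite val_Zp_nat //= => /eqP.
    rewrite -/(dvdn n _) nm mq.
    have -> : q * p * (q * p) = q ^ 2 * p ^ 2 by rewrite -!mulnn; lia.
    rewrite expnMn dvdn_pmul2l; last by rewrite expn_gt0 divn_gt0 ?prime_gt0 // dvdn_leq //; lia.
    rewrite [p ^ 2]expnS => /(dvdn_trans (dvdn_mulr _ (dvdnn p))).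
    rewrite Euclid_dvdX // andbT => hps.
    have hk2 : (i <= i + k < j)%N by lia.
    by have := hs _ hk2; rewrite hps.
  by apply/imsetP; exists (((q * s (i + k))%N%:R)%R) => //; rewrite -natrM mulnn.
rewrite sz.
have E : forall k : 'I_(j - i),
  ([seq ((((q * s (i + k)) ^ 2)%N%:R)%R : 'Z_n) | k <- iota 0 (j - i)]`_k *
   (drop i (take j y))`_k)%R = ((((q * s (i + k)) ^ 2 * f (i + k))%N)%:R)%R.
  move=> k; have kl := ltn_ord k.
  rewrite (nth_map 0%N) ?size_iota // nth_iota // add0n nth_drop nth_take; last by lia.
  by rewrite natrM /f natr_Zp.
rewrite (eq_bigr _ (fun k _ => E k)) -natr_sum.
have hN : n %| \sum_(k < j - i) (q * s (i + k)) ^ 2 * f (i + k).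
  rewrite -(big_mkord xpredT (fun k => (q * s (i + k)) ^ 2 * f (i + k))).
  have -> : \sum_(0 <= k < j - i) (q * s (i + k)) ^ 2 * f (i + k) =
            \sum_(i <= k < j) (q * s k) ^ 2 * f k.
    by rewrite -[in RHS](add0n i) big_addn; apply: eq_bigr => k _; rewrite addnC.
  have -> : \sum_(i <= k < j) (q * s k) ^ 2 * f k =
            q ^ 2 * \sum_(i <= k < j) s k ^ 2 * f k.
    by rewrite big_distrr /=; apply: eq_bigr => k _; rewrite expnMn mulnA.
  rewrite nm mq.
  have -> : q * p * (q * p) = q ^ 2 * p ^ 2 by rewrite -!mulnn; lia.
  exact: dvdn_mul (dvdnn _) hd.
move: hN; rewrite /dvdn => /eqP h.
by rewrite -(Zp_nat_mod n1) h.
Qed.
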